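(* Let $L_{\mathbb{Z}_p}$ be a lattice with integral non-degenerate quadratic form, and let $X\subseteq L^*_{\mathbb{Z}_p}$ be a subset whose $\mathbb{Q}_p$-span $\langle X\rangle_{\mathbb{Q}_p}$ is non-degenerate. Let $\mathrm{Stab}(X)\subseteq\mathrm{SO}'(L_{\mathbb{Z}_p})$ be the pointwise stabilizer of $X$ and $X^\perp_{\mathbb{Z}_p}=\{v\in L_{\mathbb{Z}_p}:\langle v,w\rangle=0\ \forall w\in X\}$ with the restricted form. Then restriction to $X^\perp_{\mathbb{Z}_p}$ is an isomorphism $\mathrm{Stab}(X)\xrightarrow{\sim}\mathrm{SO}'(X^\perp_{\mathbb{Z}_p})$; i.e. $\mathrm{Stab}(X)=\mathrm{SO}'(X^\perp_{\mathbb{Z}_p})$, every element of $\mathrm{SO}'(X^\perp_{\mathbb{Z}_p})$ extending (uniquely, by the identity on $\langle X\rangle_{\mathbb{Q}_p}$) to an element of $\mathrm{SO}'(L_{\mathbb{Z}_p})$.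
   Context: Bilinear form $\langle v,w\rangle=Q(v+w)-Q(v)-Q(w)$; integral means $Q(L_{\mathbb{Z}_p})\subseteq\mathbb{Z}_p$; for a lattice $\Lambda$ with non-degenerate form, $\Lambda^*=\{v\in\Lambda_{\mathbb{Q}_p}:\langle v,\Lambda\rangle\subseteq\mathbb{Z}_p\}$, $\mathrm{SO}(\Lambda)$ is the stabilizer of $\Lambda$ in $\mathrm{SO}(\Lambda_{\mathbb{Q}_p})$, and the discriminant kernel $\mathrm{SO}'(\Lambda)$ is the kernel of $\mathrm{SO}(\Lambda)\to\mathrm{Aut}(\Lambda^*/\Lambda)$. *)

(* Defs.v *)
From HB Require Import structures.
From mathcomp Require Import all_boot all_order all_algebra.
Set Implicit Arguments. Unset Strict Implicit. Unset Printing Implicit Defensive.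
Import Order.TTheory GRing.Theory Num.Theory.
Local Open Scope ring_scope.

Section QuadLattice.
Variable K : fieldType.

(* R : K -> Prop is a discrete valuation ring with fraction field K
   (the role of Z_p inside Q_p). *)
Definition is_dvr (R : K -> Prop) : Prop :=
  [/\ R 0, R 1,
      (forall x y, R x -> R y -> R (x - y)),
      (forall x y, R x -> R y -> R (x * y)) &
      exists pi : K, [/\ pi != 0, R pi, ~ R pi^-1 &
        forall x : K, x != 0 ->
          exists (u : K) (n : int), [/\ R u, R u^-1 & x = u * pi ^ n]]].

Variable V : vectType K.

Definition bil (Q : V -> K) (v w : V) : K := Q (v + w) - Q v - Q w.

Definition is_quadform (Q : V -> K) : Prop :=
  (forall (a : K) v, Q (a *: v) = a ^+ 2 * Q v) /\
  (forall w, linear_for *%R (fun v => bil Q v w)).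

Definition qf_nondegenerate (Q : V -> K) : Prop :=
  forall v, (forall w, bil Q v w = 0) -> v = 0.

Definition is_lattice (R : K -> Prop) (Lam : V -> Prop) : Prop :=
  exists b : (\dim {:V}).-tuple V, basis_of fullv b /\
    forall v, Lam v <-> exists c : 'I_(\dim {:V}) -> K,
        (forall i, R (c i)) /\ v = \sum_i c i *: b`_i.

Definition qf_integral (R : K -> Prop) (Q : V -> K) (Lam : V -> Prop) : Prop :=
  forall v, Lam v -> R (Q v).

Definition lat_dual (R : K -> Prop) (Q : V -> K) (Lam : V -> Prop) : V -> Prop :=
  fun v => forall l, Lam l -> R (bil Q v l).

Definition lfun_det (g : 'End(V)) : K :=
  \det (passmx.mxof (vbasis fullv) (vbasis fullv) g).

Definition in_SO (R : K -> Prop) (Q : V -> K) (Lam : V -> Prop) (g : 'End(V)) : Prop :=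
  [/\ lfun_det g = 1,
      (forall v, Q (g v) = Q v),
      (forall v, Lam v -> Lam (g v)) &
      (forall w, Lam w -> exists2 v, Lam v & g v = w)].

Definition in_SO' (R : K -> Prop) (Q : V -> K) (Lam : V -> Prop) (g : 'End(V)) : Prop :=
  in_SO R Q Lam g /\ (forall v, lat_dual R Q Lam v -> Lam (g v - v)).

End QuadLattice.

Definition lfun_restr (K : fieldType) (V : vectType K) (U : {vspace V}) (g : 'End(V))
  : 'End(subvs_of U) :=
  (linfun (vsproj U) \o g \o linfun (@vsval K V U))%VF.

(* Main.v *)
Require Import Defs.
From HB Require Import structures.
From mathcomp Require Import all_boot all_order all_algebra.
Set Implicit Arguments. Unset Strict Implicit. Unset Printing Implicit Defensive.
Import Order.TTheory GRing.Theory Num.Theory.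
Local Open Scope ring_scope.

Lemma linfunE' (K : fieldType) (aT rT : vectType K) (f : aT -> rT) (hf : linear f) v :
  linfun f v = f v.
Proof.
pose fL : {linear aT -> rT} := HB.pack f (GRing.isSemilinear.Build K aT rT _ f (GRing.semilinear_linear hf)).
exact: (lfunE fL v).
Qed.

Section Det.
Variables (K : fieldType) (V : vectType K).

Lemma mxof_entry (U : vectType K) (e : (\dim {:U}).-tuple U) (e' : (\dim {:U}).-tuple U)
  (g : 'End(U)) i j : passmx.mxof e e' g i j = coord e' j (g e`_i).
Proof. by rewrite !(mxE, comp_lfunE, lfunE) /= passmx.vecof_delta. Qed.

Lemma lfun_det_basis (U : vectType K) (e : (\dim {:U}).-tuple U) (g : 'End(U)) :
  basis_of fullv e -> lfun_det g = \det (passmx.mxof e e g).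
Proof.
move=> eb; rewrite /lfun_det; set v := vbasis fullv.
have vb : basis_of fullv v by exact: vbasisP.
have -> : passmx.mxof v v g = passmx.mxof v e \1 *m passmx.mxof e e g *m passmx.mxof e v \1.
  by rewrite -!passmx.mxof_comp // comp_lfun1r comp_lfun1l.
rewrite !det_mulmx mulrC mulrA -det_mulmx -passmx.mxof_comp // comp_lfun1l.
by rewrite passmx.mxof1 ?(basis_free eb) // det1 mul1r.
Qed.

Lemma blockmat (S : {vspace V}) (g : 'End(V)) n a b (e : n.-tuple V)
  (f : a.-tuple (subvs_of S)) (t : b.-tuple V) :
  n = (a + b)%N -> (e : seq V) = map vsval f ++ t -> free e ->
  basis_of fullv f ->
  (forall v, v \in S -> g v \in S) -> (forall k : 'I_b, g t`_k = t`_k) ->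
  \det (\matrix_(i < n, j < n) coord e j (g e`_i)) =
  \det (\matrix_(i < a, j < a) coord f j (lfun_restr S g f`_i)).
Proof.
move=> hn; subst n => he fe fb gS gt.
have eL (k : 'I_a) : e`_(lshift b k) = vsval f`_k.
  by rewrite he /= nth_cat size_map size_tuple ltn_ord (nth_map 0) ?size_tuple.
have eR (k : 'I_b) : e`_(rshift a k) = t`_k.
  by rewrite he /= nth_cat size_map size_tuple ltnNge leq_addr /= addKn.
have sL (k : 'I_a) : split (lshift b k) = inl k := unsplitK (inl k).
have sR (k : 'I_b) : split (rshift a k) = inr k := unsplitK (inr k).
set A := \matrix_(i < a, j < a) _.
have -> : \matrix_(i < a + b, j < a + b) coord e j (g e`_i) = block_mx A 0 0 1%:M.
  apply/matrixP => i j; rewrite mxE -[i]splitK -[j]splitK.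
  case: (split i) => i'; case: (split j) => j' /=.
  - rewrite block_mxEul mxE eL.
    have hr : lfun_restr S g f`_i' = \sum_(l < a) coord f l (lfun_restr S g f`_i') *: f`_l.
      exact: (coord_basis fb (memvf _)).
    have -> : g (vsval f`_i') = vsval (lfun_restr S g f`_i').
      by rewrite /lfun_restr !comp_lfunE !lfunE /= vsprojK // gS // subvsP.
    rewrite hr linear_sum /=.
    set c := fun l : 'I_a => coord f l (lfun_restr S g f`_i').
    have -> : \sum_(l < a) vsval (c l *: f`_l) =
       \sum_(j < a + b) (match split j with inl l => c l | inr _ => 0 end) *: e`_j.
      rewrite big_split_ord /= [X in _ + X]big1 ?addr0; last first.
        by move=> k _; rewrite sR scale0r.
      by apply: eq_bigr => l _; rewrite sL eL.
    by rewrite coord_sum_free // sL coord_sum_free // (basis_free fb).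
  - rewrite block_mxEur mxE eL.
    have -> : g (vsval f`_i') = vsval (lfun_restr S g f`_i').
      by rewrite /lfun_restr !comp_lfunE !lfunE /= vsprojK // gS // subvsP.
    rewrite (coord_basis fb (memvf (lfun_restr S g f`_i'))) linear_sum /=.
    set c := fun l : 'I_a => coord f l (lfun_restr S g f`_i').
    have -> : \sum_(l < a) vsval (c l *: f`_l) =
       \sum_(j < a + b) (match split j with inl l => c l | inr _ => 0 end) *: e`_j.
      rewrite big_split_ord /= [X in _ + X]big1 ?addr0; last first.
        by move=> k _; rewrite sR scale0r.
      by apply: eq_bigr => l _; rewrite sL eL.
    by rewrite coord_sum_free // sR.
  - rewrite block_mxEdl mxE eR gt -eR coord_free //.
    by rewrite -val_eqE /= gtn_eqF // ltn_addr.
  - rewrite block_mxEdr mxE eR gt -eR coord_free // -val_eqE /= eqn_add2l.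
    by rewrite -val_eqE.
by rewrite det_ublock det1 mulr1.
Qed.

Lemma vsval_img (S : {vspace V}) : (linfun (@vsval K V S) @: fullv)%VS = S.
Proof.
apply/vspaceP => v; apply/memv_imgP/idP => [[u _ ->]|vS].
  by rewrite lfunE subvsP.
by exists (vsproj S v); rewrite ?memvf // lfunE /= vsprojK.
Qed.

Lemma dim_subvs (S : {vspace V}) : \dim {:subvs_of S} = \dim S.
Proof. by rewrite dimvf. Qed.

Lemma blockdet (S T : {vspace V}) (g : 'End(V)) :
  (S :&: T = 0)%VS -> (S + T = fullv)%VS ->
  (forall v, v \in S -> g v \in S) -> (forall v, v \in T -> g v = v) ->
  lfun_det g = lfun_det (lfun_restr S g).
Proof.
move=> dST fST gS gT.
set f := vbasis (@fullv K (subvs_of S)).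
set t := vbasis T.
set s := map vsval f ++ t.
have fb : basis_of fullv f := vbasisP _.
have hs : size s == \dim {:V}.
  by rewrite size_cat size_map !size_tuple dim_subvs -dimv_disjoint_sum // fST.
pose e := Tuple hs.
have sb : basis_of (S + T)%VS s.
  apply: cat_basis; first by rewrite directvE /= dimv_disjoint_sum.
    have := limg_basis_of (f := linfun (@vsval K V S)) _ fb.
    rewrite vsval_img (eq_map (lfunE _)); apply.
    by apply/eqP; rewrite -subv0; apply/subvP => u /memv_capP [_]; rewrite memv_ker lfunE /= memv0 => /eqP h; apply/eqP/subvs_inj.
  exact: vbasisP.
have eb : basis_of fullv e by move: sb; rewrite fST.
rewrite (lfun_det_basis g eb) /lfun_det.
have -> : passmx.mxof e e g = \matrix_(i, j) coord e j (g e`_i).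
  by apply/matrixP => i j; rewrite mxof_entry mxE.
rewrite (@blockmat S g _ _ _ e f t) //.
- by congr (\det _); apply/matrixP => i j; rewrite mxof_entry mxE.
- by rewrite dim_subvs -dimv_disjoint_sum // fST.
- exact: basis_free eb.
- by move=> k; rewrite gT // vbasis_mem // mem_nth // size_tuple.
Qed.

End Det.
Section Bil.
Variables (K : fieldType) (V : vectType K) (Q : V -> K).
Hypothesis hQ : is_quadform Q.

Lemma bilC v w : bil Q v w = bil Q w v.
Proof. by rewrite /bil [w + v]addrC addrAC. Qed.

Lemma bilL a u v w : bil Q (a *: u + v) w = a * bil Q u w + bil Q v w.
Proof. exact: (hQ.2 w a u v). Qed.

Lemma Q0 : Q 0 = 0.
Proof. by have := hQ.1 0 0; rewrite scale0r expr0n /= mul0r. Qed.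

Lemma bil0l w : bil Q 0 w = 0.
Proof. by rewrite /bil add0r Q0 subr0 subrr. Qed.

Lemma bilDl u v w : bil Q (u + v) w = bil Q u w + bil Q v w.
Proof. by have := bilL 1 u v w; rewrite scale1r mul1r. Qed.

Lemma bilZl a u w : bil Q (a *: u) w = a * bil Q u w.
Proof. by have := bilL a u 0 w; rewrite !addr0 bil0l addr0. Qed.

Lemma bilNl u w : bil Q (- u) w = - bil Q u w.
Proof. by rewrite -scaleN1r bilZl mulN1r. Qed.

Lemma bilBl u v w : bil Q (u - v) w = bil Q u w - bil Q v w.
Proof. by rewrite bilDl bilNl. Qed.

Lemma bilDr u v w : bil Q w (u + v) = bil Q w u + bil Q w v.
Proof. by rewrite !(bilC w) bilDl. Qed.

Lemma bilBr u v w : bil Q w (u - v) = bil Q w u - bil Q w v.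
Proof. by rewrite !(bilC w) bilBl. Qed.

Lemma bilZr a u w : bil Q w (a *: u) = a * bil Q w u.
Proof. by rewrite !(bilC w) bilZl. Qed.

Lemma bil0r w : bil Q w 0 = 0.
Proof. by rewrite bilC bil0l. Qed.

Lemma bil_sumr n (c : 'I_n -> K) (b : 'I_n -> V) w :
  bil Q w (\sum_i c i *: b i) = \sum_i c i * bil Q w (b i).
Proof.
rewrite bilC (big_morph (fun v => bil Q v w) (fun u v => bilDl u v w) (bil0l w)).
by apply: eq_bigr => i _; rewrite bilZl bilC.
Qed.

Lemma QD v w : Q (v + w) = Q v + Q w + bil Q v w.
Proof. by rewrite /bil -[Q (v + w) - Q v - Q w]addrA -opprD [RHS]addrC subrK. Qed.

Lemma bil_pres (g : 'End(V)) : (forall v, Q (g v) = Q v) ->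
  forall v w, bil Q (g v) (g w) = bil Q v w.
Proof. by move=> hg v w; rewrite /bil -linearD !hg. Qed.

Lemma bil_linr v : linear (fun w : V => (bil Q v w : K^o)).
Proof. by move=> a u w; rewrite /= bilDr bilZr. Qed.

Lemma pres_inj (g : 'End(V)) : qf_nondegenerate Q -> (forall v, Q (g v) = Q v) ->
  lker g == 0%VS.
Proof.
move=> hnd hg; rewrite -subv0; apply/subvP => v; rewrite memv_ker memv0 => /eqP gv.
apply/eqP/hnd => w; by rewrite -(bil_pres hg) gv bil0l.
Qed.

End Bil.

Section Lat.
Variables (K : fieldType) (V : vectType K) (Q : V -> K) (R : K -> Prop) (L : V -> Prop).
Hypothesis hQ : is_quadform Q.
Hypothesis hR : is_dvr R.
Hypothesis hL : is_lattice R L.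

Lemma Rsub x y : R x -> R y -> R (x - y).
Proof. by case: hR => _ _ h _ _; apply: h. Qed.
Lemma R0 : R 0.
Proof. by case: hR. Qed.
Lemma Radd x y : R x -> R y -> R (x + y).
Proof.
move=> hx hy; have := Rsub hx (Rsub R0 hy); by rewrite sub0r opprK.
Qed.

Lemma L0 : L 0.
Proof.
case: hL => b [_ hb]; apply/hb; exists (fun=> 0); split=> [i|]; first exact: R0.
by rewrite big1 // => i _; rewrite scale0r.
Qed.

Lemma Lsub u v : L u -> L v -> L (u - v).
Proof.
case: hL => b [_ hb] /hb [c1 [h1 ->]] /hb [c2 [h2 ->]]; apply/hb.
exists (fun i => c1 i - c2 i); split=> [i|]; first exact: Rsub.
by rewrite -sumrB; apply: eq_bigr => i _; rewrite scalerBl.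
Qed.

Lemma Lopp u : L u -> L (- u).
Proof. by move=> hu; have := Lsub L0 hu; rewrite sub0r. Qed.

Lemma Ladd u v : L u -> L v -> L (u + v).
Proof. by move=> hu hv; have := Lsub hu (Lopp hv); rewrite opprK. Qed.

Lemma bilLL : qf_integral R Q L -> forall u v, L u -> L v -> R (bil Q u v).
Proof. by move=> hi u v hu hv; apply: Rsub; [apply: Rsub|]; apply: hi => //; apply: Ladd. Qed.

Lemma bidual : qf_nondegenerate Q ->
  forall v, (forall z, lat_dual R Q L z -> R (bil Q v z)) -> L v.
Proof.
move=> hnd v hv.
case: hL => b [bb hb].
pose n := \dim {:V}.
pose f := fun y : V => \row_(j < n) bil Q y b`_j.
have fl : linear f by move=> a u w; apply/rowP => j; rewrite !mxE (bilL hQ).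
pose phi : 'Hom(V, 'rV[K]_n) := linfun f.
have phiE y : phi y = f y by rewrite linfunE'.
have bilb y : (forall j : 'I_n, bil Q y b`_j = 0) -> y = 0.
  move=> hy; apply: hnd => w.
  rewrite (coord_basis bb (memvf w)) (bil_sumr hQ) big1 // => j _.
  by rewrite hy mulr0.
have ker0 : lker phi == 0%VS.
  rewrite -subv0; apply/subvP => y; rewrite memv_ker memv0 phiE => /eqP hy.
  apply/eqP/bilb => j; by have := congr1 (fun r : 'rV[K]_n => r 0 j) hy; rewrite !mxE.
have img : limg phi = fullv.
  apply/eqP; rewrite eqEdim subvf /=.
  have hd := @limg_ker_dim K V _ phi fullv.
  rewrite (eqP ker0) capv0 dimv0 add0n in hd.
  by rewrite hd !dimvf dim_matrix /n dimvf mul1r.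
have dual i : exists y, forall j : 'I_n, bil Q y b`_j = (i == j)%:R.
  have : delta_mx 0 i \in limg phi by rewrite img memvf.
  case/memv_imgP => y _ hy; exists y => j.
  by have := congr1 (fun r : 'rV[K]_n => r 0 j) hy; rewrite phiE !mxE eqxx /= => h; rewrite -h eq_sym.
apply/hb; exists (coord b ^~ v); split=> [i|]; last exact: (coord_basis bb (memvf v)).
have [y hy] := dual i.
have cE : coord b i v = bil Q y v.
  rewrite {2}(coord_basis bb (memvf v)) (bil_sumr hQ) (bigD1 i) //= hy eqxx mulr1.
  by rewrite big1 ?addr0 // => j hj; rewrite hy eq_sym (negPf hj) mulr0.
rewrite cE (bilC Q); apply: hv => l /hb [c [hc ->]].
rewrite (bil_sumr hQ) (bigD1 i) //= hy eqxx mulr1.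
by rewrite big1 ?addr0 // => j hj; rewrite hy eq_sym (negPf hj) mulr0.
Qed.

End Lat.

Section Orth.
Variables (K : fieldType) (V : vectType K) (Q : V -> K) (X : V -> Prop) (W Wp : {vspace V}).
Hypothesis hQ : is_quadform Q.
Hypothesis hnd : qf_nondegenerate Q.
Hypothesis hW : (forall x, X x -> x \in W) /\
        (forall U : {vspace V}, (forall x, X x -> x \in U) -> (W <= U)%VS).
Hypothesis hWnd : forall w, w \in W -> (forall w', w' \in W -> bil Q w w' = 0) -> w = 0.
Hypothesis hWp : forall v, v \in Wp <-> (forall x, X x -> bil Q v x = 0).

Lemma W_lker (rT : vectType K) (f : 'Hom(V, rT)) :
  (forall x, X x -> f x = 0) -> forall w, w \in W -> f w = 0.
Proof.
move=> hf w hw; have : (W <= lker f)%VS.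
  by apply: hW.2 => x hx; rewrite memv_ker hf.
by move/subvP/(_ w hw); rewrite memv_ker => /eqP.
Qed.

Lemma orthW v : v \in Wp <-> (forall w, w \in W -> bil Q v w = 0).
Proof.
split=> [/hWp hv w hw|hv]; last by apply/hWp => x hx; apply: hv; apply: hW.1.
pose f : 'Hom(V, K^o) := linfun (fun w : V => (bil Q v w : K^o)).
have := W_lker (f := f) _ hw; rewrite /f linfunE' //; last exact: bil_linr.
by apply; move=> x hx; rewrite linfunE' ?hv //; apply: bil_linr.
Qed.

Lemma capWWp : (W :&: Wp = 0)%VS.
Proof.
apply/eqP; rewrite -subv0; apply/subvP => u /memv_capP [uW /orthW uWp].
by rewrite memv0; apply/eqP/hWnd => // w' hw'; rewrite (bilC Q) uWp.
Qed.

Lemma sumWWp : (W + Wp = fullv)%VS.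
Proof.
pose k := \dim W.
pose bw := vbasis W.
pose f := fun y : V => \row_(j < k) bil Q y bw`_j.
have fl : linear f by move=> a u w; apply/rowP => j; rewrite !mxE (bilL hQ).
pose phi : 'Hom(V, 'rV[K]_k) := linfun f.
have phiE y : phi y = f y by rewrite linfunE'.
have kerS : (lker phi <= Wp)%VS.
  apply/subvP => y; rewrite memv_ker phiE => /eqP hy; apply/orthW => w hw.
  rewrite (coord_vbasis hw) (bil_sumr hQ) big1 // => j _.
  by have := congr1 (fun r : 'rV[K]_k => r 0 j) hy; rewrite !mxE => ->; rewrite mulr0.
apply/eqP; rewrite eqEdim subvf /= dimv_disjoint_sum ?capWWp //.
have hd := @limg_ker_dim K V _ phi fullv.
rewrite capfv in hd.
have h1 := dimvS kerS.
have h2 : (\dim (phi @: fullv) <= k)%N.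
  by have := dimvS (subvf (phi @: fullv)); rewrite dimvf dim_matrix mul1r.
rewrite -hd addnC leq_add //.
Qed.

Lemma decomp v : exists2 w, w \in W & exists2 u, u \in Wp & v = w + u.
Proof. by apply/memv_addP; rewrite sumWWp memvf. Qed.

Lemma Wp_nd u : u \in Wp -> (forall u', u' \in Wp -> bil Q u u' = 0) -> u = 0.
Proof.
move=> hu hu'; apply: hnd => v; have [w hw [u' hu2 ->]] := decomp v.
by rewrite (bilDr hQ) (hu' u') // (proj1 (orthW u) hu w hw) add0r.
Qed.

End Orth.

Unset Implicit Arguments.

Theorem mainTheorem13 (K : fieldType) (R : K -> Prop) (V : vectType K)
  (Q : V -> K) (L : V -> Prop) (X : V -> Prop) (W Wp : {vspace V})
  (hR : is_dvr R)
  (hQ : is_quadform Q)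
  (hnd : qf_nondegenerate Q)
  (hL : is_lattice R L)
  (hint : qf_integral R Q L)
  (hX : forall x, X x -> lat_dual R Q L x)
  (hW : (forall x, X x -> x \in W) /\
        (forall U : {vspace V}, (forall x, X x -> x \in U) -> (W <= U)%VS))
  (hWnd : forall w, w \in W -> (forall w', w' \in W -> bil Q w w' = 0) -> w = 0)
  (hWp : forall v, v \in Wp <-> (forall x, X x -> bil Q v x = 0)) :
  let M : subvs_of Wp -> Prop := fun u => L (vsval u) in
  let QM : subvs_of Wp -> K := fun u => Q (vsval u) in
  let Stab : 'End(V) -> Prop :=
    fun g => in_SO' R Q L g /\ (forall x, X x -> g x = x) in
  [/\ (forall g, Stab g ->
         (forall v, v \in Wp -> g v \in Wp) /\ in_SO' R QM M (lfun_restr Wp g)),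
      (forall g1 g2, Stab g1 -> Stab g2 ->
         lfun_restr Wp (g1 \o g2)%VF = (lfun_restr Wp g1 \o lfun_restr Wp g2)%VF),
      (forall g1 g2, Stab g1 -> Stab g2 -> lfun_restr Wp g1 = lfun_restr Wp g2 -> g1 = g2) &
      (forall h, in_SO' R QM M h ->
         exists g, [/\ Stab g, lfun_restr Wp g = h & forall w, w \in W -> g w = w])].
Proof.
move=> M QM Stab.
have bilM u u' : bil QM u u' = bil Q (vsval u) (vsval u') by [].
have restrE (g : 'End(V)) u : lfun_restr Wp g u = vsproj Wp (g (vsval u)).
  by rewrite /lfun_restr !comp_lfunE !lfunE.
have dcap : (Wp :&: W = 0)%VS by rewrite capvC (capWWp hQ hW hWnd hWp).
have dsum : (Wp + W = fullv)%VS by rewrite addvC (sumWWp hQ hW hWnd hWp).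
have orth := orthW hQ hW hWp.
have decV := decomp hQ hW hWnd hWp.
have fixW g : Stab g -> forall w, w \in W -> g w = w.
  move=> [_ hfix] w hw.
  have := W_lker hW (f := (g - \1)%VF) _ hw.
  rewrite add_lfunE opp_lfunE id_lfunE => h; apply/eqP; rewrite -subr_eq0; apply/eqP/h.
  by move=> x hx; rewrite add_lfunE opp_lfunE id_lfunE hfix // subrr.
have P1 g : Stab g -> (forall v, v \in Wp -> g v \in Wp) /\ in_SO' R QM M (lfun_restr Wp g).
  move=> sg; have gW := fixW g sg.
  case: sg => [[[hdet hQg hLg hon] hdisc] hfix].
  have bg := bil_pres hQg.
  have gWp v : v \in Wp -> g v \in Wp.
    move=> /hWp hv; apply/hWp => x hx; by rewrite -(hfix x hx) bg hv.
  have hval u : vsval (lfun_restr Wp g u) = g (vsval u).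
    by rewrite restrE vsprojK // gWp // subvsP.
  split=> //; split; first split.
  - by rewrite -(blockdet dcap dsum gWp gW).
  - by move=> u; rewrite /QM hval hQg.
  - by move=> u; rewrite /M hval; apply: hLg.
  - move=> w hw; have [v hv gv] := hon _ hw.
    have vWp : v \in Wp.
      apply/hWp => x hx; rewrite -bg (hfix x hx) gv; exact: (proj1 (hWp _) (subvsP w) x hx).
    exists (vsproj Wp v); first by rewrite /M vsprojK.
    by apply: subvs_inj; rewrite hval vsprojK.
  - move=> u hu; rewrite /M linearB /= hval.
    apply: (bidual hQ hL hnd) => z hz.
    have ginj := pres_inj hQ hnd hQg.
    set z' := (g^-1)%VF z.
    have gz : g z' = z by rewrite lker0_lfunVK.
    have z'd : lat_dual R Q L z'.
      by move=> l hl; rewrite -bg gz; exact: hz _ (hLg _ hl).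
    have Lzz : L (z' - z).
      by have := Lopp hR hL (hdisc _ z'd); rewrite gz opprB.
    have zWp : z' - z \in Wp.
      apply/hWp => x hx.
      by rewrite (bilBl hQ) -gz -{2}(hfix x hx) bg subrr.
    have -> : bil Q (g (vsval u) - vsval u) z = bil Q (vsval u) (z' - z).
      by rewrite (bilBl hQ) (bilBr hQ) -{1}gz bg.
    have := hu (vsproj Wp (z' - z)); rewrite bilM vsprojK //; apply.
    by rewrite /M vsprojK.
split.
- exact: P1.
- move=> g1 g2 s1 s2; have [g2Wp _] := P1 g2 s2.
  apply/lfunP => u; rewrite comp_lfunE !restrE comp_lfunE vsprojK //; exact/g2Wp/subvsP.
- move=> g1 g2 s1 s2 he; apply/lfunP => v.
  have [w hw [u hu ->]] := decV v.
  rewrite !linearD /= (fixW g1 s1 w hw) (fixW g2 s2 w hw); congr (_ + _).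
  have [g1Wp _] := P1 g1 s1; have [g2Wp _] := P1 g2 s2.
  have := congr1 (fun h : 'End(subvs_of Wp) => vsval (h (vsproj Wp u))) he.
  by rewrite /= !restrE !(vsprojK hu) !vsprojK ?g1Wp ?g2Wp.
move=> h [[hdet hQh hLh hon] hdisc].
have cWWp := capWWp hQ hW hWnd hWp.
set p := daddv_pi W Wp.
set q := daddv_pi Wp W.
pose g := (p + (linfun (@vsval K V Wp) \o h \o linfun (vsproj Wp) \o q))%VF.
have pw w : w \in W -> p w = w by move=> hw; rewrite /p daddv_pi_id.
have qu u : u \in Wp -> q u = u by move=> hu; rewrite /q daddv_pi_id.
have pq v : p v + q v = v.
  by rewrite /p /q daddv_pi_add // (sumWWp hQ hW hWnd hWp) memvf.
have pu u : u \in Wp -> p u = 0.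
  by move=> hu; have := pq u; rewrite qu // addrC -{3}[u]addr0 => hh; exact: (addrI u hh).
have qw w : w \in W -> q w = 0.
  by move=> hw; have := pq w; rewrite pw // -{3}[w]addr0 => hh; exact: (addrI w hh).
have gE w u : w \in W -> u \in Wp -> g (w + u) = w + vsval (h (vsproj Wp u)).
  move=> hw hu; rewrite /g add_lfunE !comp_lfunE !lfunE /=.
  have -> : p (w + u) = p w + p u := linearD p w u.
  have -> : q (w + u) = q w + q u := linearD q w u.
  by rewrite pw // pu // qw // qu // addr0 add0r.
have gW w : w \in W -> g w = w.
  by move=> hw; have := gE w 0 hw (mem0v _); rewrite !addr0 !linear0 addr0.
have gu u : u \in Wp -> g u = vsval (h (vsproj Wp u)).
  by move=> hu; have := gE 0 u (mem0v _) hu; rewrite !add0r.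
have gWp u : u \in Wp -> g u \in Wp by move=> hu; rewrite gu // subvsP.
have restr : lfun_restr Wp g = h.
  by apply/lfunP => u; rewrite restrE gu ?subvsP // !vsvalK.
have hbM := bil_pres hQh.
have dualM v w u : (forall l, L l -> R (bil Q v l)) -> w \in W -> u \in Wp -> v = w + u ->
    lat_dual R QM M (vsproj Wp u).
  move=> hv hw hu ev m hm; rewrite bilM vsprojK //.
  have <- : bil Q v (vsval m) = bil Q u (vsval m).
    by rewrite ev (bilDl hQ) (bilC Q w) (proj1 (orth _) (subvsP m) w hw) add0r.
  exact: hv.
have hinj : lker h == 0%VS.
  rewrite -subv0; apply/subvP => c; rewrite memv_ker memv0 => /eqP hc.
  apply/eqP/subvs_inj; rewrite linear0 /=.
  apply: (Wp_nd hQ hnd hW hWnd hWp (subvsP c)) => u' hu'.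
  have := hbM c (vsproj Wp u'); rewrite hc !bilM vsprojK // => <-.
  by rewrite linear0 (bil0l hQ).
exists g; split=> //; split; first split; first split.
- by rewrite (blockdet dcap dsum gWp gW) restr hdet.
- move=> v; have [w hw [u hu ->]] := decV v.
  rewrite gE // !QD (bilC Q w) (proj1 (orth _) (subvsP _) w hw).
  rewrite (bilC Q w) (proj1 (orth _) hu w hw).
  by have := hQh (vsproj Wp u); rewrite /QM vsprojK // => ->.
- move=> v hv; have [w hw [u hu ev]] := decV v.
  have d := dualM v w u (fun l hl => bilLL hR hL hint hv hl) hw hu ev.
  have := hdisc _ d; rewrite /M linearB /= vsprojK // => hL'.
  rewrite ev gE //.
  have -> : w + vsval (h (vsproj Wp u)) = (w + u) + (vsval (h (vsproj Wp u)) - u).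
    by rewrite -addrA [u + _]addrC subrK.
  by rewrite -ev; apply: (Ladd hR hL hv hL').
- move=> w' hw'; have [w hw [u hu ew]] := decV w'.
  have d := dualM w' w u (fun l hl => bilLL hR hL hint hw' hl) hw hu ew.
  set u0 := vsproj Wp u in d.
  set c0 := (h^-1)%VF u0.
  have hc0 : h c0 = u0 by rewrite lker0_lfunVK.
  have c0d : lat_dual R QM M c0.
    by move=> m hm; rewrite -hbM hc0; exact: d _ (hLh _ hm).
  have := hdisc _ c0d; rewrite hc0 /M linearB /= /u0 vsprojK // => hM.
  exists (w + vsval c0).
    have -> : w + vsval c0 = w' - (u - vsval c0) by rewrite ew opprB -addrA [u + _]addrC subrK.
    exact: (Lsub hR hL hw' hM).
  by rewrite gE ?subvsP // vsvalK hc0 /u0 vsprojK // ew.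
- move=> v hv; have [w hw [u hu ev]] := decV v.
  have d := dualM v w u hv hw hu ev.
  have := hdisc _ d; rewrite /M linearB /= vsprojK //.
  by rewrite ev gE // opprD addrACA subrr add0r.
- by move=> x hx; apply: gW; apply: hW.1.
Qed.
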